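(* If a shift space $X\subseteq\mathscr{A}^\infty$ has the $\bar d$-shadowing property and $\sigma(X)=X$, then $X$ is chain mixing.
   Context: Shift spaces are nonempty closed shift-invariant subsets of $\mathscr{A}^\infty=\mathscr{A}^{\mathbb N_0}$ ($\mathscr{A}$ finite, $\sigma$ the left shift); $\mathcal L(X)$, $\mathcal L_n(X)$ denote the words (of length $n$) appearing in $X$. $\bar d(x,y)=\limsup_{n\to\infty}\frac1n|\{0\le j<n:x_j\ne y_j\}|$. $X$ has the $\bar d$-shadowing property if for every $\varepsilon>0$ there is $N$ such that for every sequence $(w^{(j)})_{j\ge1}$ in $\mathcal L(X)$ with $|w^{(j)}|\ge N$ there is $x'\in X$ with $\bar d(w^{(1)}w^{(2)}\cdots,x')<\varepsilon$. The $n$-th Markov approximation $X^M_n$ is the set of $x\in\mathscr{A}^\infty$ all of whose subwords of length $n+1$ are in $\mathcal L_{n+1}(X)$. $X$ is chain mixing if $X^M_n$ is topologically mixing for all but finitely many $n$ (topologically mixing: for all $u,w\in\mathcal L$ there is $N$ such that for each $n\ge N$ some $v$ with $|v|=n$ has $uvw\in\mathcal L$). *)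

(* Defs.v *)
From HB Require Import structures.
From mathcomp Require Import all_boot all_order all_algebra.
From mathcomp Require Import all_classical all_reals all_analysis.
Set Implicit Arguments. Unset Strict Implicit. Unset Printing Implicit Defensive.
Import Order.TTheory GRing.Theory Num.Theory.
Local Open Scope ring_scope.

Section Shifts.
Variable A : finType.

Definition seqA := nat -> A.

Definition shiftA (x : seqA) : seqA := fun n => x n.+1.

Definition subword (x : seqA) (i m : nat) : seq A := mkseq (fun k => x (i + k)) m.

(* closed in the product topology of the discrete topology on A:
   every point of the closure of X lies in X *)
Definition closed_seqs (X : seqA -> Prop) : Prop :=
  forall x : seqA,
    (forall n, exists y, X y /\ forall i, (i < n)%N -> y i = x i) -> X x.

Definition shift_space (X : seqA -> Prop) : Prop :=
  (exists x, X x) /\ closed_seqs X /\ (forall x, X x -> X (shiftA x)).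

Definition lang (X : seqA -> Prop) (w : seq A) : Prop :=
  exists x, X x /\ exists i, w = subword x i (size w).

Definition markov_approx (X : seqA -> Prop) (n : nat) : seqA -> Prop :=
  fun x => forall i, lang X (subword x i n.+1).

Definition top_mixing (Y : seqA -> Prop) : Prop :=
  forall u w, lang Y u -> lang Y w ->
    exists N, forall n, (N <= n)%N ->
      exists v : seq A, size v = n /\ lang Y (u ++ v ++ w).

Definition chain_mixing (X : seqA -> Prop) : Prop :=
  exists n0, forall n, (n0 <= n)%N -> top_mixing (markov_approx X n).

Definition dbar (R : realType) (x y : seqA) : \bar R :=
  limn_esup (fun n : nat =>
    ((#|[set j : 'I_n | x j != y j]|)%:R / n%:R : R)%:E).

(* z is the infinite concatenation w 0 ++ w 1 ++ w 2 ++ ... *)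
Definition is_concat (w : nat -> seq A) (z : seqA) : Prop :=
  forall j i (a : A), (i < size (w j))%N ->
    z ((\sum_(k < j) size (w k)) + i)%N = nth a (w j) i.

Definition dbar_shadowing (R : realType) (X : seqA -> Prop) : Prop :=
  forall eps : R, 0 < eps ->
    exists N : nat, (0 < N)%N /\
      forall (w : nat -> seq A),
        (forall j, lang X (w j) /\ (N <= size (w j))%N) ->
        forall z, is_concat w z ->
          exists x', X x' /\ (dbar R z x' < eps%:E)%E.

End Shifts.

(* Main.v *)
Require Import Defs.
From mathcomp Require Import all_boot all_order all_algebra.
From mathcomp Require Import all_classical all_reals all_analysis.
From mathcomp Require Import zify ring lra.
Set Implicit Arguments. Unset Strict Implicit. Unset Printing Implicit Defensive.
Import Order.TTheory GRing.Theory Num.Theory.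

Definition shiftn (A : finType) (y : seqA A) k : seqA A := fun t => y (k + t).
Definition glue (A : finType) (y1 y2 : seqA A) o : seqA A :=
  fun t => if (t < o)%N then y1 t else y2 (t - o)%N.
Definition vert (A : finType) (X : seqA A -> Prop) n p := lang X p /\ size p = n.
Definition walk (A : finType) (X : seqA A -> Prop) n m (y : seqA A) :=
  forall t, (t < m)%N -> lang X (subword y t n.+1).
Definition TT (A : finType) (X : seqA A -> Prop) n m p q :=
  exists y, walk X n m y /\ subword y 0 n = p /\ subword y m n = q.

Lemma subword_ext (A : finType) (y y' : seqA A) i i' m :
  (forall t, (t < m)%N -> y (i + t)%N = y' (i' + t)%N) -> subword y i m = subword y' i' m.
Proof.
by move=> H; rewrite /subword /mkseq; apply/eq_in_map => t; rewrite mem_iota add0n => /H.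
Qed.

Lemma subword_eq (A : finType) (y y' : seqA A) i i' m :
  subword y i m = subword y' i' m -> forall t, (t < m)%N -> y (i + t)%N = y' (i' + t)%N.
Proof.
move=> H t tm; have := congr1 (fun s => nth (y 0%N) s t) H.
by rewrite /subword !nth_mkseq.
Qed.

Lemma size_subword (A : finType) (y : seqA A) i m : size (subword y i m) = m.
Proof. by rewrite size_mkseq. Qed.

Lemma subword_shiftn (A : finType) (y : seqA A) k i m :
  subword (shiftn y k) i m = subword y (k + i) m.
Proof. by apply: subword_ext => t _; rewrite /shiftn addnA. Qed.

Lemma subword_cat (A : finType) (y : seqA A) i a b :
  subword y i (a + b) = subword y i a ++ subword y (i + a) b.
Proof.
rewrite /subword /mkseq iotaD map_cat; congr (_ ++ _).
by rewrite add0n -[a]addn0 iotaDl -map_comp addn0; apply: eq_map => t /=; congr y; exact: addnA.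
Qed.

Lemma lang_point (A : finType) (X : seqA A -> Prop) x i m :
  X x -> lang X (subword x i m).
Proof. by move=> Xx; exists x; split => //; exists i; rewrite size_subword. Qed.

Lemma vert_point (A : finType) (X : seqA A -> Prop) n x i :
  X x -> vert X n (subword x i n).
Proof. by move=> Xx; split; [exact: lang_point|exact: size_subword]. Qed.

Lemma lang_vert (A : finType) (X : seqA A -> Prop) n (y : seqA A) i :
  lang X (subword y i n.+1) -> vert X n (subword y i n).
Proof.
move=> [x [Xx [i' E]]]; rewrite size_subword in E.
have -> : subword y i n = subword x i' n.
  by apply: subword_ext => t tn; apply: (subword_eq E); rewrite ltnS ltnW.
exact: vert_point.
Qed.

Lemma TT_point (A : finType) (X : seqA A -> Prop) n x i j :
  X x -> (i <= j)%N -> TT X n (j - i) (subword x i n) (subword x j n).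
Proof.
move=> Xx ij; exists (shiftn x i); split; first by move=> t _; rewrite subword_shiftn; exact: lang_point.
by rewrite !subword_shiftn addn0 subnKC.
Qed.

Lemma glue_l (A : finType) (y1 y2 : seqA A) o n t :
  subword y1 o n = subword y2 0 n -> (t < o + n)%N -> glue y1 y2 o t = y1 t.
Proof.
move=> E tl; rewrite /glue; case: ifP => // /negbT; rewrite -leqNgt => ot.
have tn : (t - o < n)%N by rewrite ltn_subLR.
by have := subword_eq E tn; rewrite add0n subnKC.
Qed.

Lemma glue_pre (A : finType) (y1 y2 : seqA A) o n i l :
  subword y1 o n = subword y2 0 n -> (i + l <= o + n)%N ->
  subword (glue y1 y2 o) i l = subword y1 i l.
Proof.
move=> E il; apply: subword_ext => t tl; rewrite (glue_l E) //.
by apply: leq_trans il; rewrite ltn_add2l.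
Qed.

Lemma glue_post (A : finType) (y1 y2 : seqA A) o i l :
  (o <= i)%N -> subword (glue y1 y2 o) i l = subword y2 (i - o) l.
Proof.
move=> oi; apply: subword_ext => t _; rewrite /glue ltnNge (leq_trans oi (leq_addr _ _)) /=.
by rewrite addnBAC.
Qed.

Lemma TT_comp (A : finType) (X : seqA A -> Prop) n m k p q r :
  TT X n m p q -> TT X n k q r -> TT X n (m + k) p r.
Proof.
move=> [y1 [w1 [p1 q1]]] [y2 [w2 [q2 r2]]].
have E : subword y1 m n = subword y2 0 n by rewrite q1 q2.
exists (glue y1 y2 m); split; last split.
- move=> t tmk; case: (ltnP t m) => tm.
    by rewrite (glue_pre E) //; [exact: w1|rewrite addnS ltn_add2r].
  rewrite glue_post //; apply: w2; by rewrite ltn_subLR // addnC.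
- by rewrite (glue_pre E) // add0n leq_addl.
- by rewrite glue_post ?leq_addr // addKn.
Qed.

Lemma TT_zero (A : finType) (X : seqA A -> Prop) n m p q :
  TT X n m p q -> TT X n 0 p p.
Proof. by move=> [y [_ [py _]]]; exists y; split => // t. Qed.

Lemma TT_pow (A : finType) (X : seqA A -> Prop) n m p :
  TT X n m p p -> forall c, TT X n (c * m) p p.
Proof.
move=> H; elim=> [|c IH]; first exact: TT_zero H.
by rewrite mulSn; exact: TT_comp H IH.
Qed.

Lemma TT_large (A : finType) (X : seqA A -> Prop) n s p :
  TT X n s p p -> TT X n s.+1 p p -> forall m, (s * s <= m)%N -> TT X n m p p.
Proof.
move=> Hs Hs1 m sm; case: s Hs Hs1 sm => [|s] Hs Hs1 sm.
  by rewrite -(muln1 m); apply: TT_pow.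
rewrite (divn_eq m s.+1).
set q := m %/ s.+1; set r := m %% s.+1.
have rs : (r < s.+1)%N by rewrite ltn_mod.
have qr : (r <= q)%N.
  by apply: leq_trans (ltnW rs) _; rewrite /q leq_divRL.
have -> : (q * s.+1 + r = (q - r) * s.+1 + r * s.+2)%N.
  by move: qr; clear; nia.
by apply: TT_comp; apply: TT_pow.
Qed.
Lemma ex_min_prop (P : nat -> Prop) :
  (exists d, P d) -> exists d, P d /\ forall d', (d' < d)%N -> ~ P d'.
Proof.
move=> [d Pd].
suff H : forall k d, (d <= k)%N -> P d -> exists d, P d /\ forall d', (d' < d)%N -> ~ P d'.
  exact: (H d d).
elim=> [|k IH] {Pd}d dk Pd.
  by exists d; split=> // d'; rewrite (leqn0 d) in dk; rewrite (eqP dk).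
case: (pselect (exists d', (d' < d)%N /\ P d')) => [[d' [lt Pd']]|nd].
  by apply: (IH d') => //; rewrite -ltnS (leq_trans lt).
by exists d; split=> // d' lt Pd'; apply: nd; exists d'.
Qed.

Lemma consec_or_div (S : nat -> Prop) : S 0%N ->
  (forall a b, S a -> S b -> S (a + b)%N) -> forall s, (0 < s)%N -> S s ->
  (exists t, S t /\ S t.+1) \/ (exists g, (1 < g)%N /\ forall m, S m -> (g %| m)%N).
Proof.
move=> S0 Sadd s s0 Ss.
pose P d := (0 < d)%N /\ exists t, S t /\ S (t + d)%N.
have [g [[g0 [t [St Stg]]] gmin]] : exists d, P d /\ forall d', (d' < d)%N -> ~ P d'.
  by apply: ex_min_prop; exists s; split => //; exists 0%N; rewrite add0n.
have Smul : forall c a, S a -> S (c * a)%N.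
  by move=> + a Sa; elim=> [|c IH]; [rewrite mul0n|rewrite mulSn; apply: Sadd].
case: (ltnP 1 g) => g1; last first.
  left; exists t; have g1' : g = 1%N by apply/eqP; rewrite eqn_leq g1 g0.
  by rewrite -addn1 -g1'.
right; exists g; split => // m Sm.
set q := (m %/ g)%N; set r := (m %% g)%N.
have e1 : S (m + q * t)%N by apply: Sadd => //; apply: Smul.
have e2 : S (q * (t + g))%N by apply: Smul.
have E : (m + q * t = q * (t + g) + r)%N.
  by rewrite {1}(divn_eq m g) -/q -/r mulnDr; ring.
rewrite /dvdn; case: (posnP r) => [r0|r0]; first exact/eqP.
exfalso; apply: (gmin r); first by rewrite ltn_mod.
by split => //; exists (q * (t + g))%N; split => //; rewrite -E.
Qed.
Lemma limsup_ge (R : realType) (u : (\bar R)^nat) (e : \bar R) :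
  (forall N, exists2 T, (N <= T)%N & (e <= u T)%E) -> (e <= limn_esup u)%E.
Proof.
move=> H; rewrite limn_esup_lim.
have -> : limn (esups u) = ereal_inf (range (esups u)).
  by apply: cvg_lim => //; exact: cvg_esups_inf.
apply: le_ereal_inf_tmp => _ [n _ <-]; have [T nT eT] := H n.
apply: le_trans eT _; apply: ereal_sup_ubound; exists T => //.
Qed.

Lemma count_lower (A : finType) (z x' : seqA A) n M p k0 J :
  (0 < n)%N -> (n <= M)%N -> (0 < p)%N ->
  (forall j r, (r + n <= M)%N ->
     subword x' ((k0 + p * j) * M + r)%N n != subword z ((k0 + p * j) * M + r)%N n) ->
  forall T, ((k0 + p * J) * M <= T)%N ->
  (J * (M %/ n) <= #|[set j : 'I_T | z j != x' j]|)%N.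
Proof.
move=> n0 nM p0 dead T TJ.
set c := (M %/ n)%N.
have cn : (c * n <= M)%N by exact: leq_trunc_div.
pose base j w := ((k0 + p * j) * M + w * n)%N.
pose P j w := fun s => z (base j w + s)%N != x' (base j w + s)%N.
pose pos j w := (base j w + find (P j w) (iota 0 n))%N.
have key : forall j w, (w < c)%N ->
   (find (P j w) (iota 0 n) < n)%N /\ z (pos j w) != x' (pos j w).
  move=> j w wc.
  have hasP' : has (P j w) (iota 0 n).
    apply/negPn/negP => /hasPn H; move: (dead j (w * n)%N).
    have -> : (w * n + n <= M)%N by apply: leq_trans cn; rewrite -mulSnr leq_mul2r wc orbT.
    move=> /(_ isT) /negP; apply; apply/eqP; apply: subword_ext => t tn.
    have := H t; rewrite mem_iota add0n tn => /(_ isT); rewrite negbK /P /base => /eqP.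
    by move=> ->.
  have fn : (find (P j w) (iota 0 n) < n)%N by move: hasP'; rewrite has_find size_iota.
  split => //.
  by have := nth_find 0%N hasP'; rewrite nth_iota ?add0n.
have posdiv : forall j w, (w < c)%N ->
    (pos j w %/ M = k0 + p * j)%N /\ ((pos j w %% M) %/ n = w)%N.
  move=> j w wc; have [fn _] := key j w wc.
  have lt : (w * n + find (P j w) (iota 0 n) < M)%N.
    apply: leq_trans cn; apply: leq_trans (_ : (w * n + n <= _)%N); first by rewrite ltn_add2l.
    by rewrite -mulSnr leq_mul2r wc orbT.
  have M0 : (0 < M)%N by apply: leq_trans nM.
  rewrite /pos /base -addnA divnMDl // divn_small // addn0; split => //.
  by rewrite modnMDl modn_small // divnMDl // divn_small // addn0.
pose f i := pos (i %/ c)%N (i %% c)%N.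
have c0 : (0 < c)%N by rewrite divn_gt0.
have finj : {in iota 0 (J * c) &, injective f}.
  move=> i i' _ _ E.
  have [d1 m1] := posdiv (i %/ c)%N (i %% c)%N (ltn_pmod _ c0).
  have [d2 m2] := posdiv (i' %/ c)%N (i' %% c)%N (ltn_pmod _ c0).
  rewrite /f in E; rewrite E in d1 m1.
  rewrite (divn_eq i c) (divn_eq i' c) -m1 m2; congr (_ * _ + _)%N.
  by move: d1; rewrite d2 => /addnI /eqP; rewrite eqn_mul2l gtn_eqF //= => /eqP.
have fT : forall i, (i < J * c)%N -> (f i < T)%N.
  move=> i iJ; have wc := ltn_pmod i c0.
  have jJ : (i %/ c < J)%N by rewrite ltn_divLR.
  have [fn _] := key (i %/ c)%N (i %% c)%N wc.
  apply: leq_trans TJ; rewrite /f /pos /base /=.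
  apply: (@leq_trans ((k0 + p * (i %/ c)).+1 * M)%N).
    rewrite mulSnr -addnA ltn_add2l.
    apply: leq_trans cn; apply: leq_trans (_ : ((i %% c) * n + n <= _)%N); first by rewrite ltn_add2l.
    by rewrite -mulSnr leq_mul2r wc orbT.
  rewrite leq_mul2r; apply/orP; right; rewrite -addnS leq_add2l.
  by move: jJ p0; clear; nia.
case: (posnP J) => [->|J0]; first by rewrite mul0n.
have T0 : (0 < T)%N by have := fT 0%N; rewrite muln_gt0 J0 c0 => /(_ isT) /(leq_ltn_trans (leq0n _)).
pose o0 : 'I_T := Ordinal T0.
pose s' := [seq insubd o0 (f i) | i <- iota 0 (J * c)].
have -> : (J * c = size s')%N by rewrite size_map size_iota.
rewrite cardE; apply: uniq_leq_size.
  rewrite map_inj_in_uniq ?iota_uniq // => i i' ii ii' E.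
  move: ii ii'; rewrite !mem_iota !add0n => ii ii'.
  apply: finj; rewrite ?mem_iota ?add0n //.
  by have := congr1 val E; rewrite !val_insubd !fT.
move=> x /mapP [i]; rewrite mem_iota add0n => ii ->.
have wc := ltn_pmod i c0.
have [_ ne] := key (i %/ c)%N (i %% c)%N wc.
by rewrite mem_enum inE val_insubd fT.
Qed.

Lemma density (R : realType) (A : finType) (z x' : seqA A) n M p k0 :
  (0 < n)%N -> (n <= M)%N -> (0 < p)%N ->
  (forall j r, (r + n <= M)%N ->
     subword x' ((k0 + p * j) * M + r)%N n != subword z ((k0 + p * j) * M + r)%N n) ->
  (((((2 * n * p.+1)%N)%:R : R)^-1)%:E <= dbar R z x')%E.
Proof.
move=> n0 nM p0 dead; apply: limsup_ge => N.
set J := (N + k0).+1.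
have M0 : (0 < M)%N by apply: leq_trans nM.
exists ((k0 + p * J) * M)%N.
  by rewrite /J; move: M0 p0; clear; nia.
rewrite lee_fin.
have cnt := count_lower n0 nM p0 dead (leqnn _).
set T := ((k0 + p * J) * M)%N in cnt *.
set C := #|_| in cnt *.
have T0 : (0 < T)%N by rewrite /T muln_gt0 M0 andbT addn_gt0 muln_gt0 p0 orbT.
have D0 : (0 < (2 * n * p.+1))%N by rewrite !muln_gt0 n0.
rewrite ler_pdivlMr ?ltr0n // mulrC ler_pdivrMr ?ltr0n // -natrM ler_nat.
set c := (M %/ n)%N in cnt.
have cn : (c * n <= M)%N by exact: leq_trunc_div.
have Mc : (M < c.+1 * n)%N by exact: ltn_ceil.
have c1 : (1 <= c)%N by rewrite divn_gt0.
apply: (@leq_trans (J * c * (2 * n * p.+1))%N); last by rewrite leq_mul2r cnt orbT.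
have kJ : (k0 < J)%N by rewrite /J ltnS leq_addl.
have e1 : (M <= 2 * c * n)%N by move: Mc c1; clear; nia.
have e2 : (k0 + p * J <= p.+1 * J)%N by rewrite mulSn leq_add2r (ltnW kJ).
rewrite /T; apply: (@leq_trans (p.+1 * J * (2 * c * n))%N); first exact: leq_mul.
by rewrite [X in (_ <= X)%N]mulnC -!mulnA leq_eqVlt; apply/orP; left; apply/eqP; ring.
Qed.
Local Open Scope ring_scope.

Definition bz (A : finType) M (F : nat -> seqA A) : seqA A :=
  fun t => F (t %/ M)%N (t %% M)%N.

Lemma bz_concat (A : finType) M (F : nat -> seqA A) :
  (0 < M)%N -> is_concat (fun k => mkseq (F k) M) (bz M F).
Proof.
move=> M0 j i a; rewrite size_mkseq => iM.
rewrite (eq_bigr (fun _ => M)) => [|k _]; last by rewrite size_mkseq.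
rewrite sum_nat_const card_ord /bz divnMDl // divn_small // addn0.
by rewrite modnMDl modn_small // nth_mkseq.
Qed.

Lemma bz_win (A : finType) M (F : nat -> seqA A) k r l :
  (0 < M)%N -> (r + l <= M)%N -> subword (bz M F) (k * M + r) l = subword (F k) r l.
Proof.
move=> M0 rl; apply: subword_ext => t tl.
have lt : (r + t < M)%N by apply: leq_trans rl; rewrite ltn_add2l.
by rewrite /bz -addnA divnMDl // divn_small // addn0 modnMDl modn_small.
Qed.

Lemma leftext (A : finType) (X : seqA A -> Prop) :
  (forall y, X y -> exists x, X x /\ shiftA x = y) ->
  forall L x, X x -> exists x', X x' /\ forall t, x' (L + t)%N = x t.
Proof.
move=> surj; elim=> [|L IH] x Xx; first by exists x.
have [x'' [X'' E'']] := IH x Xx.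
have [x' [X' E']] := surj _ X''.
exists x'; split => // t; rewrite -E'' -E' /shiftA; congr x'; by rewrite addSn.
Qed.

Lemma eps_pos (R : realType) n k : (0 < n)%N -> (0 < k)%N ->
  (0 : R) < (((2 * n * k)%N)%:R)^-1.
Proof. by move=> n0 k0; rewrite invr_gt0 ltr0n !muln_gt0 n0 k0. Qed.

Lemma strong_conn (R : realType) (A : finType) (X : seqA A -> Prop) n :
  (forall y, X y -> exists x, X x /\ shiftA x = y) ->
  dbar_shadowing R X -> (0 < n)%N ->
  forall a b, vert X n a -> vert X n b -> exists m, (0 < m)%N /\ TT X n m a b.
Proof.
move=> surj sh n0 a b [[xa [Xa [ia Ea]]] sa] [[xb [Xb [ib Eb]]] sb].
rewrite sa in Ea; rewrite sb in Eb.
have [N [N0 HN]] := sh _ (eps_pos R n0 (isT : (0 < 3)%N)).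
set L := (N + n)%N.
have HL : (0 < L)%N by rewrite addn_gt0 N0.
have nL : (n <= L)%N by rewrite leq_addl.
have [xb' [Xb' xbE]] := leftext surj L Xb.
pose F k := fun r => if odd k then xb' (ib + n + r)%N else xa (ia + r)%N.
have Hw : forall j, lang X (mkseq (F j) L) /\ (N <= size (mkseq (F j) L))%N.
  move=> j; rewrite size_mkseq leq_addr; split => //; rewrite /F; case: (odd j).
    exact: (lang_point (ib + n) L Xb').
  exact: (lang_point ia L Xa).
have [x' [Xx' dlt]] := HN _ Hw (bz L F) (@bz_concat _ L F HL).
pose surv k r := (r + n <= L)%N /\ subword x' (k * L + r) n = subword (bz L F) (k * L + r) n.
case: (pselect (exists k1 r1 k2 r2, [/\ ~~ odd k1, odd k2, (k1 < k2)%N, surv k1 r1 & surv k2 r2])).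
  move=> [k1 [r1 [k2 [r2 [ev od lt [r1L S1] [r2L S2]]]]]].
  rewrite bz_win // /F (negbTE ev) in S1.
  rewrite bz_win // /F od in S2.
  have S1' : subword x' (k1 * L + r1) n = subword xa (ia + r1) n.
    by rewrite S1; apply: subword_ext => t _; rewrite addnA.
  have S2' : subword x' (k2 * L + r2) n = subword xb' (ib + n + r2) n.
    by rewrite S2; apply: subword_ext => t _; rewrite addnA.
  have le12 : (k1 * L + r1 < k2 * L + r2)%N.
    apply: (@leq_trans (k1.+1 * L)); first by rewrite mulSnr ltn_add2l; apply: leq_trans r1L; rewrite -addn1 leq_add2l.
    by apply: leq_trans (leq_addr _ _); rewrite leq_mul2r lt orbT.
  have T1 := TT_point n Xa (leq_addr r1 ia).
  rewrite -Ea addKn in T1.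
  have T2 := TT_point n Xx' (ltnW le12).
  rewrite S1' S2' in T2.
  have r2L' : (ib + n + r2 <= ib + L)%N by rewrite -addnA leq_add2l addnC.
  have T3 := TT_point n Xb' r2L'.
  have E3 : subword xb' (ib + L) n = b.
    by rewrite Eb; apply: subword_ext => t _; rewrite -xbE; congr xb'; ring.
  rewrite E3 in T3.
  exists (r1 + (k2 * L + r2 - (k1 * L + r1)) + (ib + L - (ib + n + r2)))%N; split.
    by rewrite !addn_gt0 subn_gt0 le12 orbT.
  exact: TT_comp (TT_comp T1 T2) T3.
move=> Hno; exfalso.
have contra : ((((2 * n * 3)%N)%:R : R)^-1%:E <= dbar R (bz L F) x')%E ->
  False.
  by move=> H; move: (lt_le_trans dlt H); rewrite ltxx.
case: (pselect (exists k1 r1, ~~ odd k1 /\ surv k1 r1)).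
  move=> [k1 [r1 [ev S1]]]; apply: contra.
  apply: (@density R A (bz L F) x' n L 2 k1.+1 n0 nL isT) => j r rL.
  apply/negP => /eqP E; apply: Hno; exists k1, r1, (k1.+1 + 2 * j)%N, r; split => //.
  - by rewrite oddD oddM /= addbF.
  - by rewrite ltnS leq_addr.
move=> Hno2; apply: contra.
apply: (@density R A (bz L F) x' n L 2 0 n0 nL isT) => j r rL.
apply/negP => /eqP E; apply: Hno2; exists (0 + 2 * j)%N, r; split => //.
by rewrite oddM.
Qed.

Lemma arith1 U V r r1 k : (r1 <= r)%N -> (U + V + r - (U + r1) + k = V + (r - r1 + k))%N.
Proof. lia. Qed.
Lemma arith2 U V r r1 : (r < r1)%N -> (r1 <= V)%N -> (U + V + r - (U + r1) + (r1 - r) = V)%N.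
Proof. lia. Qed.

Lemma aperiodic (R : realType) (A : finType) (X : seqA A -> Prop) n :
  (forall y, X y -> exists x, X x /\ shiftA x = y) ->
  dbar_shadowing R X -> (exists x, X x) -> (0 < n)%N ->
  forall b, vert X n b -> exists t, TT X n t b b /\ TT X n t.+1 b b.
Proof.
move=> surj sh [x0 X0] n0 b vb.
have SC := strong_conn surj sh n0.
have [m [m0 Tm]] := SC b b vb vb.
have := @consec_or_div (fun m => TT X n m b b) (TT_zero Tm)
  (fun a c Ha Hc => TT_comp Ha Hc) m m0 Tm.
case => [//|[g [g1 Hdiv]]]; exfalso.
have g0 : (0 < g)%N by apply: ltnW.
have loop : forall p m, vert X n p -> TT X n m p p -> (g %| m)%N.
  move=> p m' vp Tp; have [k [_ Tk]] := SC p b vp vb; have [l [_ Tl]] := SC b p vb vp.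
  have h1 := Hdiv _ (TT_comp Tl (TT_comp Tp Tk)).
  have h2 := Hdiv _ (TT_comp Tl Tk).
  by rewrite addnCA (dvdn_addl _ h2) in h1.
have [N [N0 HN]] := sh _ (eps_pos R n0 (ltn0Sn g)).
set M := ((N + n) * g).+1.
have HM : (0 < M)%N by [].
have nM : (n <= M)%N.
  by rewrite /M ltnW // ltnS (leq_trans (leq_addl N n)) // leq_pmulr.
pose F := fun (k : nat) (r : nat) => x0 r.
have Hw : forall j, lang X (mkseq (F j) M) /\ (N <= size (mkseq (F j) M))%N.
  move=> j; rewrite size_mkseq; split; first exact: (lang_point 0 M X0).
  by rewrite /M ltnW // ltnS (leq_trans (leq_addr n N)) // leq_pmulr.
have [x' [Xx' dlt]] := HN _ Hw (bz M F) (@bz_concat _ M F HM).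
have contra : ((((2 * n * g.+1)%N)%:R : R)^-1%:E <= dbar R (bz M F) x')%E -> False.
  by move=> H; move: (lt_le_trans dlt H); rewrite ltxx.
pose surv k r := (r + n <= M)%N /\ subword x' (k * M + r) n = subword (bz M F) (k * M + r) n.
case: (pselect (exists k1 r1, surv k1 r1)); last first.
  move=> Hno; apply: contra.
  apply: (@density R A (bz M F) x' n M g 0 n0 nM g0) => j r rM.
  by apply/negP => /eqP E; apply: Hno; exists (0 + g * j)%N, r.
move=> [k1 [r1 [r1M S1]]]; apply: contra.
apply: (@density R A (bz M F) x' n M g k1.+1 n0 nM g0) => j r rM.
apply/negP => /eqP S2.
set k2 := (k1.+1 + g * j)%N in S2.
rewrite bz_win // in S1; rewrite bz_win // in S2.
set D := (M + g * (j * M))%N.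
have k2E : (k2 * M = k1 * M + D)%N by rewrite /k2 /D; ring.
have le : (k1 * M + r1 <= k2 * M + r)%N.
  rewrite k2E -addnA leq_add2l; apply: leq_trans (leq_addr _ _).
  by apply: leq_trans (leq_addr _ _); apply: leq_trans r1M; exact: leq_addr.
have Tx := TT_point n Xx' le; rewrite S1 S2 in Tx.
have vp : vert X n (subword x0 r1 n) by exact: vert_point.
have vq : vert X n (subword x0 r n) by exact: vert_point.
have gD : (g %| D)%N.
  case: (leqP r1 r) => rr.
    have T0 := TT_point n X0 rr.
    have [k [_ Tk]] := SC _ _ vq vp.
    have h1 := loop _ _ vp (TT_comp Tx Tk).
    have h2 := loop _ _ vp (TT_comp T0 Tk).
    have E : (k2 * M + r - (k1 * M + r1) + k = D + (r - r1 + k))%N.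
      by rewrite k2E arith1.
    by rewrite E (dvdn_addl _ h2) in h1.
  have T0 := TT_point n X0 (ltnW rr).
  have h1 := loop _ _ vp (TT_comp Tx T0).
  have E : (k2 * M + r - (k1 * M + r1) + (r1 - r) = D)%N.
    rewrite k2E arith2 //; apply: leq_trans (leq_addr _ _); apply: leq_trans r1M; exact: leq_addr.
  by rewrite E in h1.
have gM : (g %| M)%N by rewrite /D dvdn_addl ?dvdn_mulr in gD.
move: gM; rewrite /M -addn1 dvdn_addr ?dvdn_mull // dvdn1 => /eqP g1'.
by rewrite g1' in g1.
Qed.
Local Close Scope ring_scope.

Lemma mixing_vert (R : realType) (A : finType) (X : seqA A -> Prop) n :
  (forall y, X y -> exists x, X x /\ shiftA x = y) ->
  dbar_shadowing R X -> (exists x, X x) -> (0 < n)%N ->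
  forall a b, vert X n a -> vert X n b ->
  exists M0, forall m, (M0 <= m)%N -> TT X n m a b.
Proof.
move=> surj sh ne n0 a b va vb.
have [k [_ Tk]] := strong_conn surj sh n0 va vb.
have [t [Tt Tt1]] := aperiodic surj sh ne n0 vb.
exists (k + t * t)%N => m hm.
have km : (k <= m)%N by apply: leq_trans hm; exact: leq_addr.
rewrite -(subnKC km); apply: TT_comp Tk (TT_large Tt Tt1 _).
by rewrite leq_subRL.
Qed.

Lemma top_mix (R : realType) (A : finType) (X : seqA A -> Prop) n :
  (forall y, X y -> exists x, X x /\ shiftA x = y) ->
  dbar_shadowing R X -> (exists x, X x) -> (0 < n)%N ->
  top_mixing (markov_approx X n).
Proof.
move=> surj sh ne n0 u w [y [Yy [i Eu]]] [y2 [Yy2 [j Ew]]].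
set o := (i + size u)%N.
have va := lang_vert (Yy o); have vb := lang_vert (Yy2 j).
have [M0 HM0] := mixing_vert surj sh ne n0 va vb.
exists M0 => m mM0.
have [P [WP [Pa Pb]]] := HM0 m mM0.
have E1 : subword y o n = subword P 0 n by rewrite Pa.
set Z1 := glue y P o.
have E2 : subword Z1 (o + m) n = subword (shiftn y2 j) 0 n.
  by rewrite /Z1 glue_post ?leq_addr // addKn Pb subword_shiftn addn0.
set Z := glue Z1 (shiftn y2 j) (o + m).
exists (subword Z o m); split; first exact: size_subword.
exists Z; split.
  move=> t; case: (ltnP t (o + m)) => h.
    rewrite (glue_pre E2); last by rewrite addnS ltn_add2r.
    case: (ltnP t o) => h'.
      by rewrite (glue_pre E1); [exact: Yy|rewrite addnS ltn_add2r].
    rewrite glue_post //; apply: WP; by rewrite ltn_subLR.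
  by rewrite glue_post // subword_shiftn; exact: Yy2.
exists i; rewrite !size_cat size_subword !subword_cat.
congr (_ ++ (_ ++ _)).
- rewrite (glue_pre E2); last by rewrite /o -addnA leq_addr.
  by rewrite (glue_pre E1) // /o leq_addr.
- by rewrite -/o /Z glue_post // subnn subword_shiftn addn0.
Qed.

Theorem mainTheorem6 (R : realType) (A : finType) (X : seqA A -> Prop) :
  shift_space X ->
  dbar_shadowing R X ->
  (forall y, X y <-> exists x, X x /\ shiftA x = y) ->
  chain_mixing X.
Proof.
move=> [ne _] sh surjiff.
have surj : forall y, X y -> exists x, X x /\ shiftA x = y by move=> y /surjiff.
exists 1%N => n n1; exact: (top_mix surj sh ne n1).
Qed.
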